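(* Let $\mathcal A$ be a finite set of monomials of $S=K[x_1,\ldots,x_n]$, minimal with respect to divisibility, let $\alpha=(k_1,\ldots,k_n)\in\mathbb N^n$, fix $i$, and let $\beta=\alpha+\epsilon_i$. Let $\gamma=\mathbf 1+\epsilon_{ik_i}\in\mathbb N^{|\alpha|}$, where $\mathbf 1$ is the all-ones vector and $\epsilon_{ik_i}$ is the unit vector at the coordinate corresponding to the variable $x_{ik_i}$ of $S^\alpha$. Then there is a $K$-algebra isomorphism $K[(\mathcal A^\alpha)^\gamma]\cong K[\mathcal A^\beta]$ (induced by a relabeling of variables).
   Context: $\mathbb N$ denotes the positive integers. For $\alpha=(k_1,\ldots,k_n)$, $S^\alpha=K[x_{ij}:1\le i\le n,1\le j\le k_i]$, $\pi:S^\alpha\to S$, $x_{ij}\mapsto x_i$, and for a set $\mathcal A$ of monomials of $S$ minimal w.r.t. divisibility, $\mathcal A^\alpha$ is the set of monomials $w\in S^\alpha$ with $\pi(w)\in\mathcal A$. The same construction is applied to $\mathcal A^\alpha$, viewed as a set of monomials in the $|\alpha|=k_1+\cdots+k_n$ variables $x_{ij}$ of $S^\alpha$, with respect to $\gamma\in\mathbb N^{|\alpha|}$, giving $(\mathcal A^\alpha)^\gamma$. $K[\mathcal B]$ denotes the $K$-algebra generated by a set of monomials $\mathcal B$. *)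

(* Defs.v *)
From HB Require Import structures.
From mathcomp Require Import all_boot all_algebra.
From mathcomp Require Import mpoly.
Set Implicit Arguments. Unset Strict Implicit. Unset Printing Implicit Defensive.
Import GRing.Theory.
Local Open Scope ring_scope.

Definition polyV (K : comRingType) (V : finType) := {mpoly K[#|V|]}.
Definition xv (K : comRingType) (V : finType) (v : V) : polyV K V :=
  'X_(enum_rank v).

Definition expo (V : finType) := {ffun V -> nat}.
Definition monoV (K : comRingType) (V : finType) (e : expo V) : polyV K V :=
  \prod_(v : V) xv K v ^+ e v.

Inductive in_alg (K : comRingType) (V : finType) (B : pred (expo V))
  : polyV K V -> Prop :=
  | alg_const (c : K) : in_alg B (c%:MP)
  | alg_mono (e : expo V) : B e -> in_alg B (monoV K e)
  | alg_add (p q : polyV K V) : in_alg B p -> in_alg B q -> in_alg B (p + q)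
  | alg_mul (p q : polyV K V) : in_alg B p -> in_alg B q -> in_alg B (p * q).

(* Variables of the expanded ring for a vector g : V -> nat:
   the pairs (v, j) with j < g v (x_{v,j}, 0-based second index). *)
Definition expvars (V : finType) (g : V -> nat) : finType :=
  {v : V & 'I_(g v)}.

(* pi : x_{v,j} |-> x_v, on exponent vectors. *)
Definition proj (V : finType) (g : V -> nat) (w : expo (expvars g)) : expo V :=
  [ffun v => \sum_(j < g v) w (Tagged (fun v => 'I_(g v)) j)].

Definition expand (V : finType) (B : pred (expo V)) (g : V -> nat)
  : pred (expo (expvars g)) := fun w => B (proj w).

Definition rename (K : comRingType) (V W : finType) (sigma : V -> W)
  (p : polyV K V) : polyV K W :=
  mmap (@mpolyC _ K) (fun r => xv K (sigma (enum_val r))) p.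

Arguments expand {V} B g _.
Arguments proj {V} g w.
Arguments rename K {V W} sigma p.

(* Main.v *)
Require Import Defs.
From HB Require Import structures.
From mathcomp Require Import all_boot all_algebra.
From mathcomp Require Import mpoly.
From mathcomp Require Import zify.
Set Implicit Arguments. Unset Strict Implicit. Unset Printing Implicit Defensive.
Local Open Scope ring_scope.
Module Helpers.
Import GRing.Theory.

Section Ren.
Variables (K : comRingType).
Implicit Types V W : finType.

Lemma renameC (V W : finType) (s : V -> W) c : rename K s c%:MP = c%:MP.
Proof. by rewrite /rename mmapC. Qed.
Lemma renameD (V W : finType) (s : V -> W) p q : rename K s (p + q) = rename K s p + rename K s q.
Proof. by rewrite /rename rmorphD. Qed.
Lemma renameM (V W : finType) (s : V -> W) p q : rename K s (p * q) = rename K s p * rename K s q.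
Proof. by rewrite /rename rmorphM. Qed.
Lemma renameX (V W : finType) (s : V -> W) v : rename K s (xv K v) = xv K (s v).
Proof. by rewrite /rename /xv mmapX mmap1U enum_rankK. Qed.
Lemma renameXm (V W : finType) (s : V -> W) c m : rename K s (c *: 'X_[m]) =
  c%:MP * \prod_(r < #|V|) xv K (s (enum_val r)) ^+ m r.
Proof. by rewrite /rename mmapZ mmapX. Qed.

Lemma rename_prod (V W : finType) (s : V -> W) e : rename K s (monoV K e) = \prod_v xv K (s v) ^+ e v.
Proof.
rewrite /monoV /rename rmorph_prod; apply: eq_bigr => v _.
by rewrite rmorphXn /= -/(rename K s _) renameX.
Qed.

Lemma rename_comp (V W U : finType) (s : V -> W) (t : W -> U) (u : V -> U) p :
  (forall v, t (s v) = u v) -> rename K t (rename K s p) = rename K u p.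
Proof.
move=> tsu; elim/mpolyind: p => [|c m p _ _ IH].
  by rewrite /rename !raddf0.
rewrite !renameD IH renameXm renameM renameC /rename rmorph_prod mmapZ mmapX.
congr (_ * _ + _); apply: eq_bigr => r _; rewrite rmorphXn /= -/(rename K t _).
by rewrite renameX tsu.
Qed.

Lemma rename_id (V : finType) (s : V -> V) p : (forall v, s v = v) -> rename K s p = p.
Proof.
move=> sid; elim/mpolyind: p => [|c m p _ _ IH].
  by rewrite /rename !raddf0.
rewrite renameD IH renameXm -mul_mpolyC -mmap1_id /mmap1.
congr (_ * _ + _); apply: eq_bigr => r _.
by rewrite sid /xv enum_valK.
Qed.

Lemma rename_inj (V W : finType) (s : V -> W) : bijective s -> injective (rename K s).
Proof.
case=> s' ss' s's p q e.
have := congr1 (rename K s') e.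
by rewrite !(@rename_comp V W V s s' id) // !rename_id.
Qed.

Lemma rename_mono (V W : finType) (s : V -> W) (e : expo V) (f : expo W) : bijective s ->
  (forall v, f (s v) = e v) -> rename K s (monoV K e) = monoV K f.
Proof.
move=> bs fe; rewrite rename_prod /monoV (reindex s (onW_bij _ bs)) /=.
by apply: eq_bigr => v _; rewrite fe.
Qed.
End Ren.

Lemma projE (V : finType) (g : V -> nat) (w : expo (expvars g)) v :
  proj g w v = (\sum_(x : expvars g | tag x == v) w x)%N.
Proof.
rewrite ffunE.
transitivity (\sum_(u | u == v) \sum_(j : 'I_(g u)) w (Tagged (fun u => 'I_(g u)) j))%N.
  by rewrite big_pred1_eq.
rewrite (sig_big_dep (fun u => u == v) (fun _ _ => true)
   (fun u j => w (Tagged (fun u => 'I_(g u)) j))).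
by apply: eq_big => [[u j]|[u j] _] //=; rewrite andbT.
Qed.

Lemma tagged_eq (I : eqType) (P : I -> Type) (v : I) (a b : P v) :
  existT P v a = existT P v b -> a = b.
Proof. by apply: Eqdep_dec.inj_pair2_eq_dec => x y; apply: eq_comparable. Qed.

Section Comb.
Variables (n : nat) (alpha : 'I_n -> nat) (i : 'I_n).
Definition betaD (j : 'I_n) : nat := (alpha j + (j == i))%N.
Definition gammaD (u : expvars alpha) : nat :=
  if (tag u == i) && (val (tagged u) == (alpha i).-1) then 2%N else 1%N.

Definition sig (x : expvars gammaD) : expvars betaD :=
  Tagged (fun v => 'I_(betaD v))
    (insubd (widen_ord (leq_addr _ _) (tagged (tag x)))
            (val (tagged (tag x)) + val (tagged x))%N).

Lemma gammaP (u : expvars alpha) (j : 'I_(gammaD u)) :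
  (j : nat) = 0%N \/ ((j : nat) = 1%N /\ tag u = i /\ val (tagged u) = (alpha i).-1).
Proof.
have := ltn_ord j; move: (nat_of_ord j) => k; clear j; rewrite /gammaD.
case E: (_ && _) => hj; last by left; case: k hj => [|[]].
move/andP: E => [/eqP e1 /eqP e2].
by case: k hj => [|[|]] //; [left|right].
Qed.

Lemma sig_val x : val (tagged (sig x)) = (val (tagged (tag x)) + val (tagged x))%N.
Proof.
rewrite val_insubd; case: ifP => // /negP []; case: x => [[v k] j] /=.
have hk := ltn_ord k; rewrite /betaD.
case: (gammaP j) => [-> | [-> [/= ev ek]]]; first by rewrite addn0 ltn_addr.
subst v; rewrite /= in ek hk *; rewrite eqxx /=; lia.
Qed.

Lemma sig_tag x : tag (sig x) = tag (tag x).
Proof. by []. Qed.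

Lemma sig_inj : injective sig.
Proof.
move=> x1 x2 H.
have hv := congr1 (fun y : expvars betaD => nat_of_ord (tagged y)) H.
move: H hv; rewrite !sig_val.
case: x1 x2 => [[v1 k1] j1] [[v2 k2] j2] /= H.
have ev : v1 = v2 := congr1 (@tag _ _) H.
subst v2 => e.
have hk1 := ltn_ord k1; have hk2 := ltn_ord k2.
have ek : val k1 = val k2.
  case: (gammaP j1) => [h1 | [h1 [/= ev1 ek1]]];
  case: (gammaP j2) => [h2 | [h2 [/= ev2 ek2]]]; rewrite ?h1 ?h2 in e.
  - by rewrite !addn0 in e.
  - subst v1; exfalso; rewrite /= in ek2 e hk1 hk2; lia.
  - subst v1; exfalso; rewrite /= in ek1 e hk1 hk2; lia.
  - by rewrite ek1 ek2.
have ek' : k1 = k2 := val_inj ek.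
subst k2.
have ej : j1 = j2 by apply: ord_inj; move/eqP: e; rewrite eqn_add2l => /eqP.
by subst j2.
Qed.

Hypothesis apos : forall j, (0 < alpha j)%N.

Lemma gamma_pos u : (0 < gammaD u)%N.
Proof. by rewrite /gammaD; case: ifP. Qed.

Lemma sig_surj y : exists x, sig x = y.
Proof.
case: y => v m.
have hm := ltn_ord m.
case: (boolP (nat_of_ord m < alpha v)%N) => h.
  exists (Tagged (fun u => 'I_(gammaD u)) (Ordinal (gamma_pos (Tagged _ (Ordinal h))))).
  congr (existT _ _ _); apply: val_inj; rewrite val_insubd /= addn0.
  by rewrite hm.
have ev : v == i.
  move: (nat_of_ord m) hm h => k; rewrite /betaD.
  by case: (v == i) => //=; rewrite addn0 => ->.
move/eqP: ev => ev; subst v.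
have hm' : nat_of_ord m = alpha i.
  move: (nat_of_ord m) hm h => k; rewrite /betaD eqxx; lia.
have hk : ((alpha i).-1 < alpha i)%N by rewrite prednK // apos.
pose u := Tagged (fun v => 'I_(alpha v)) (Ordinal hk).
exists (Tagged (fun u => 'I_(gammaD u)) (insubd (Ordinal (gamma_pos u)) 1%N)).
congr (existT _ _ _); apply: val_inj; rewrite val_insubd /=.
have g2 : gammaD u = 2%N by rewrite /gammaD /= !eqxx.
have e1 : (1 < gammaD u)%N by rewrite g2.
rewrite val_insubd e1 /= hm' addn1 prednK ?apos //.
by rewrite /betaD eqxx addn1 ltnSn.
Qed.

Lemma sig_bij : bijective sig.
Proof.
apply: inj_card_bij; first exact: sig_inj.
rewrite -(card_codom sig_inj); apply: subset_leq_card; apply/subsetP => y _.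
by have [x <-] := sig_surj y; apply: codom_f.
Qed.

Lemma key (f : expo (expvars betaD)) :
  proj betaD f = proj alpha (proj gammaD [ffun x => f (sig x)]).
Proof.
apply/ffunP => v; rewrite projE [RHS]projE.
rewrite (reindex sig (onW_bij _ sig_bij)) /=.
rewrite (partition_big (fun x : expvars gammaD => tag x) (fun u => tag u == v)) //=.
apply: eq_bigr => u /eqP Hu; rewrite projE; apply: eq_big => x.
  by case: (tag x =P u) => [->|]; rewrite ?Hu ?eqxx ?andbF.
by move=> _; rewrite ffunE.
Qed.
End Comb.
End Helpers.
Import Helpers.

Theorem lemma2p10 (K : fieldType) (n : nat) (A : seq (expo 'I_n))
  (alpha : 'I_n -> nat) (i : 'I_n) :
  (forall j, (0 < alpha j)%N) ->
  (forall a b, a \in A -> b \in A -> (forall k, (a k <= b k)%N) -> a = b) ->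
  let beta : 'I_n -> nat := fun j => (alpha j + (j == i))%N in
  let gamma : expvars alpha -> nat := fun u =>
    if (tag u == i) && (val (tagged u) == (alpha i).-1) then 2%N else 1%N in
  let Aa : pred (expo (expvars alpha)) := expand (fun a => a \in A) alpha in
  let Aag : pred (expo (expvars gamma)) := expand Aa gamma in
  let Ab : pred (expo (expvars beta)) := expand (fun a => a \in A) beta in
  exists sigma : expvars gamma -> expvars beta,
    bijective sigma /\
    injective (rename K sigma) /\
    (forall p, in_alg Aag p -> in_alg Ab (rename K sigma p)) /\
    (forall q, in_alg Ab q -> exists2 p, in_alg Aag p & rename K sigma p = q).
Proof.
move=> apos _ beta gamma Aa Aag Ab.
have bs := @sig_bij n alpha i apos.
have hk : forall f, Ab f = Aag [ffun x => f (sig x)].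
  by move=> f; rewrite /Ab /Aag /Aa /expand /= (@key n alpha i apos).
exists (sig (alpha:=alpha) (i:=i)); split; first exact: bs.
split; first exact: rename_inj.
have [s' ss' s's] := bs.
split.
  move=> p; elim => [c|e He|p1 q1 _ IH1 _ IH2|p1 q1 _ IH1 _ IH2].
  - by rewrite renameC; apply: alg_const.
  - rewrite (@rename_mono _ _ _ _ e [ffun y => e (s' y)] bs); last first.
      by move=> x; rewrite ffunE ss'.
    apply: alg_mono; rewrite hk.
    suff -> : [ffun x => [ffun y => e (s' y)] (sig x)] = e by [].
    by apply/ffunP => x; rewrite !ffunE ss'.
  - by rewrite renameD; apply: alg_add.
  - by rewrite renameM; apply: alg_mul.
move=> q; elim => [c|f Hf|p1 q1 _ [r1 H1 <-] _ [r2 H2 <-]|p1 q1 _ [r1 H1 <-] _ [r2 H2 <-]].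
- by exists c%:MP; [apply: alg_const | rewrite renameC].
- exists (monoV K [ffun x => f (sig x)]).
    by apply: alg_mono; rewrite -hk.
  by apply: rename_mono => // x; rewrite ffunE.
- by exists (r1 + r2); [apply: alg_add | rewrite renameD].
- by exists (r1 * r2); [apply: alg_mul | rewrite renameM].
Qed.
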